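(* Let $q=r^2$ where $r$ is a prime power and let $s$ be a positive integer. Let $C_1,\dots,C_s$ be linear codes of the same length $m$ over $\mathbb{F}_q$. If $A\in M_{s,s}(\mathbb{F}_q)$ satisfies $AA^\dagger=\lambda J_s$ for some nonzero $\lambda\in\mathbb{F}_q$ and $C_i=C_{s-i+1}^{\perp_H}$ for all $1\le i\le s$, then the matrix-product code $C_A=[C_1,\dots,C_s]\cdot A$ is Hermitian self-dual, i.e., $C_A=C_A^{\perp_H}$.
   Context: For $a\in\mathbb{F}_q$, $\overline{a}:=a^r$. For a matrix $A=[a_{ij}]$ over $\mathbb{F}_q$, $A^\dagger:=[\overline{a_{ji}}]$. $J_s$ is the $s\times s$ anti-diagonal matrix with all anti-diagonal entries equal to $1$ and all other entries $0$. The Hermitian inner product on $\mathbb{F}_q^n$ is $\langle u,v\rangle_H=\sum_i u_i\overline{v_i}$, and $C^{\perp_H}$ is the dual of $C$ with respect to it. If $C_i$ has generator matrix $G_i$ and $A=[a_{ij}]\in M_{s,l}(\mathbb{F}_q)$, the matrix-product code $[C_1,\dots,C_s]\cdot A$ is the linear code of length $ml$ generated by the block matrix whose $(i,j)$ block is $a_{ij}G_i$. *)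

(* Defs.v *)
From HB Require Import structures.
From mathcomp Require Import all_boot all_order all_algebra all_field.
Set Implicit Arguments. Unset Strict Implicit. Unset Printing Implicit Defensive.
Import GRing.Theory.
Local Open Scope ring_scope.

(* Conjugation a |-> a^r (the Frobenius of order 2 when #|F| = r^2). *)
Definition hconj (F : finFieldType) (r : nat) (a : F) : F := a ^+ r.

Definition hdagger (F : finFieldType) (r : nat) (k l : nat) (A : 'M[F]_(k, l))
  : 'M[F]_(l, k) := (map_mx (hconj r) A)^T.

Definition antidiag (F : finFieldType) (s : nat) : 'M[F]_s :=
  \matrix_(i < s, j < s) ((j == rev_ord i)%:R).

Definition hdot (F : finFieldType) (r : nat) (n : nat) (u v : 'rV[F]_n) : F :=
  \sum_(j < n) u 0 j * hconj r (v 0 j).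

(* A linear code of length n is represented by a generator matrix G; the
   code is the row space of G: v is a codeword iff (v <= G)%MS. *)
Definition in_code (F : finFieldType) (k n : nat) (G : 'M[F]_(k, n)) (v : 'rV[F]_n)
  : Prop := (v <= G)%MS.

Definition in_hdual (F : finFieldType) (r : nat) (k n : nat) (G : 'M[F]_(k, n))
  (v : 'rV[F]_n) : Prop :=
  forall u : 'rV[F]_n, (u <= G)%MS -> hdot r u v = 0.

(* Generator matrix of the matrix-product code [C_1,...,C_s] . A, where C_i is
   generated by G i : 'M_(k i, m) and A : 'M_(s, l): the block matrix whose
   (i,j) block is a_ij G_i. *)
Definition mpc_gen (F : finFieldType) (s l m : nat) (k : 'I_s -> nat)
  (G : forall i : 'I_s, 'M[F]_(k i, m)) (A : 'M[F]_(s, l))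
  : 'M[F]_(\sum_(i < s) k i, \sum_(j < l) m) :=
  \mxblock_(i < s, j < l) (A i j *: G i).

(* Main.v *)
Require Import Defs.
From HB Require Import structures.
From mathcomp Require Import all_boot all_order all_algebra all_field.
Import GRing.Theory.
Local Open Scope ring_scope.
Set Implicit Arguments. Unset Strict Implicit.

Lemma cj_props (F : finFieldType) (r p e : nat) :
  prime p -> r = (p ^ e)%N -> #|F| = (r ^ 2)%N ->
  [/\ forall x y : F, hconj r (x + y) = hconj r x + hconj r y,
      forall x y : F, hconj r (x * y) = hconj r x * hconj r y,
      hconj r (0 : F) = 0 &
      forall x : F, hconj r (hconj r x) = x].
Proof.
move=> pp hr hF.
have pc : p \in [pchar F].
  by apply: (@card_finPcharP F p (e * 2)) => //; rewrite hF hr expnM.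
have r0 : (0 < r)%N by rewrite hr expn_gt0 prime_gt0.
split.
- by move=> x y; rewrite /hconj exprDn_pchar // hr pnatX (pnatE _ pp) pc.
- by move=> x y; rewrite /hconj exprMn.
- by rewrite /hconj expr0n; move: r0; case: (r) => //.
- by move=> x; rewrite /hconj -exprM mulnn -hF expf_card.
Qed.

Lemma hdot_suml (F : finFieldType) r n (I : finType) (f : I -> 'rV[F]_n) v :
  hdot r (\sum_i f i) v = \sum_i hdot r (f i) v.
Proof.
rewrite /hdot exchange_big /=; apply: eq_bigr => j _.
by rewrite summxE mulr_suml.
Qed.

Lemma hdotZl (F : finFieldType) r n a (u v : 'rV[F]_n) :
  hdot r (a *: u) v = a * hdot r u v.
Proof.
by rewrite /hdot mulr_sumr; apply: eq_bigr => j _; rewrite mxE mulrA.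
Qed.

Lemma hdot_sumr (F : finFieldType) r n (I : finType) (f : I -> 'rV[F]_n) u :
  (forall x y : F, hconj r (x + y) = hconj r x + hconj r y) ->
  hconj r (0 : F) = 0 ->
  hdot r u (\sum_i f i) = \sum_i hdot r u (f i).
Proof.
move=> cjD cj0.
rewrite /hdot exchange_big /=; apply: eq_bigr => j _.
rewrite summxE (big_morph (hconj r) cjD cj0) mulr_sumr //.
Qed.

Lemma hdotZr (F : finFieldType) r n a (u v : 'rV[F]_n) :
  (forall x y : F, hconj r (x * y) = hconj r x * hconj r y) ->
  hdot r u (a *: v) = hconj r a * hdot r u v.
Proof.
move=> cjM.
by rewrite /hdot mulr_sumr; apply: eq_bigr => j _; rewrite mxE cjM mulrCA.
Qed.

Lemma hdot_blocks (F : finFieldType) r s m (u v : 'rV[F]_(\sum_(j < s) m)) :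
  hdot r u v = \sum_j hdot r (submxrow u j) (submxrow v j).
Proof.
have E : forall n' (u v : 'rV[F]_n'),
    hdot r u v = (u *m (map_mx (hconj r) v)^T) 0 0.
  by move=> n' u' v'; rewrite /hdot !mxE; apply: eq_bigr => j _; rewrite !mxE.
rewrite E -[u]submxrowK -[map_mx _ v]submxrowK tr_mxrow mul_mxrow_mxcol summxE.
apply: eq_bigr => j _; rewrite E mxrowK.
have -> : submxrow (map_mx (hconj r) v) j = map_mx (hconj r) (submxrow v j).
  by apply/matrixP => a b; rewrite !mxE.
by [].
Qed.

Lemma mpc_mul (F : finFieldType) s l m (k : 'I_s -> nat)
  (G : forall i : 'I_s, 'M[F]_(k i, m)) (A : 'M[F]_(s, l))
  (x : 'rV[F]_(\sum_(i < s) k i)) :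
  x *m mpc_gen G A = \mxrow_j \sum_i A i j *: (submxrow x i *m G i).
Proof.
rewrite /mpc_gen -{1}[x]submxrowK mul_mxrow_mxblock; apply: eq_mxrow => j.
by apply: eq_bigr => i _; rewrite scalemxAr.
Qed.

Lemma antidiag2 (F : finFieldType) s : antidiag F s *m antidiag F s = 1%:M.
Proof.
apply/matrixP => i j; rewrite !mxE (bigD1 (rev_ord i)) //= big1 ?addr0.
  by rewrite !mxE eqxx rev_ordK mul1r eq_sym.
move=> t /negbTE ne; rewrite !mxE.
have -> : (t == rev_ord i) = false by rewrite ne.
by rewrite mul0r.
Qed.

Lemma antidiag_sum (F : finFieldType) s (f : 'I_s -> F) i :
  \sum_t f t * antidiag F s t i = f (rev_ord i).
Proof.
rewrite (bigD1 (rev_ord i)) //= big1 ?addr0.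
  by rewrite mxE rev_ordK eqxx mulr1.
move=> t ne; rewrite mxE.
have -> : (i == rev_ord t) = false.
  apply/negbTE; apply: contra ne => /eqP ->; by rewrite rev_ordK.
by rewrite mulr0.
Qed.

Theorem corollary3p3 (F : finFieldType) (r p e : nat) :
  prime p -> (0 < e)%N -> r = (p ^ e)%N -> #|F| = (r ^ 2)%N ->
  forall (s m : nat) (k : 'I_s -> nat) (G : forall i : 'I_s, 'M[F]_(k i, m))
         (A : 'M[F]_s) (lambda : F),
  (0 < s)%N ->
  lambda != 0 ->
  A *m hdagger r A = lambda *: antidiag F s ->
  (forall (i : 'I_s) (v : 'rV[F]_m),
      in_code (G i) v <-> in_hdual r (G (rev_ord i)) v) ->
  forall v : 'rV[F]_(\sum_(j < s) m),
    in_code (mpc_gen G A) v <-> in_hdual r (mpc_gen G A) v.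
Proof.
move=> pp _ hr hF s m k G A lambda _ l0 hA hG v.
have [cjD cjM cj0 cjK] := cj_props pp hr hF.
have hE : forall i i', \sum_j A i j * hconj r (A i' j)
                       = lambda * antidiag F s i i'.
  move=> i i'; have := congr1 (fun B : 'M[F]_s => B i i') hA; rewrite !mxE => <-.
  by apply: eq_bigr => j _; rewrite !mxE.
split.
- move=> /submxP [y ->] u /submxP [x ->].
  rewrite hdot_blocks.
  under eq_bigr do rewrite !mpc_mul !mxrowK hdot_suml.
  under eq_bigr do under eq_bigr do rewrite hdotZl hdot_sumr //.
  under eq_bigr do under eq_bigr do under eq_bigr do rewrite hdotZr //.
  rewrite exchange_big /=; apply: big1 => i _.
  under eq_bigr do rewrite mulr_sumr.
  rewrite exchange_big /=; apply: big1 => i' _.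
  under eq_bigr do rewrite mulrA.
  rewrite -mulr_suml hE.
  have [Ei|ne] := eqVneq i' (rev_ord i); last first.
    by rewrite mxE (negbTE ne) mulr0 mul0r.
  have Ei2 : i = rev_ord i' by rewrite Ei rev_ordK.
  clear Ei; subst i.
  have h1 : in_hdual r (G (rev_ord i')) (submxrow y i' *m G i').
    by apply/hG; apply: submxMl.
  by rewrite (h1 _ (submxMl _ _)) mulr0.
- move=> hv.
  pose Binv := lambda^-1 *: (hdagger r A *m antidiag F s).
  have hB : Binv *m A = 1%:M.
    apply: mulmx1C; rewrite /Binv -scalemxAr mulmxA hA -scalemxAl antidiag2.
    by rewrite scalerA mulVf // scale1r.
  have hBe : forall j i, Binv j i = lambda^-1 * hconj r (A (rev_ord i) j).
    by move=> j i; rewrite /Binv mxE mxE antidiag_sum /hdagger !mxE.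
  pose w i := \sum_j Binv j i *: submxrow v j.
  have recon : forall j', submxrow v j' = \sum_i A i j' *: w i.
    move=> j'; rewrite /w.
    under eq_bigr do rewrite scaler_sumr.
    rewrite exchange_big /=.
    transitivity (\sum_j (Binv *m A) j j' *: submxrow v j).
      rewrite hB (bigD1 j') //= big1 ?addr0; first by rewrite mxE eqxx scale1r.
      by move=> j ne; rewrite mxE (negbTE ne) scale0r.
    apply: eq_bigr => j _; rewrite mxE scaler_suml; apply: eq_bigr => i _.
    by rewrite scalerA mulrC.
  have wG : forall i, (w i <= G i)%MS.
    move=> i; apply/hG => u /submxP [x ->].
    pose i0 := rev_ord i.
    have he : (\mxrow_j (A i0 j *: (x *m G i0)) <= mpc_gen G A)%MS.
      have -> : \mxrow_j (A i0 j *: (x *m G i0))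
                = x *m \mxrow_j (A i0 j *: G i0).
        by rewrite mul_mxrow; apply: eq_mxrow => j; rewrite scalemxAr.
      apply: submx_trans (submxMl _ _) _.
      have -> : \mxrow_j (A i0 j *: G i0) = submxcol (mpc_gen G A) i0.
        by rewrite /mpc_gen mxblockEv mxcolK.
      exact: rowsub_sub.
    have := hv _ he; rewrite hdot_blocks.
    under eq_bigr do rewrite mxrowK hdotZl.
    move=> h0.
    rewrite /w hdot_sumr //.
    under eq_bigr do rewrite hdotZr // hBe cjM cjK -mulrA.
    by rewrite -mulr_sumr h0 mulr0.
  apply/submxP; exists (\mxrow_i (w i *m pinvmx (G i))).
  rewrite mpc_mul -[v]submxrowK; apply: eq_mxrow => j.
  rewrite recon; apply: eq_bigr => i _.
  by rewrite mxrowK mulmxKpV.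
Qed.
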